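(* The image $\operatorname{Im}\sharp$ is contained in the even subalgebra $U(\mathfrak{sl}_2)_e$ and is a proper subalgebra of it; that is, $\operatorname{Im}\sharp\neq U(\mathfrak{sl}_2)_e$ and $\operatorname{Im}\sharp\neq\mathbb C\cdot 1$.
   Context: All algebras are unital associative over $\mathbb C$, $[x,y]=xy-yx$, $\mathbf i=\sqrt{-1}$. $U(\mathfrak{sl}_2)$ is generated by $E,F,H$ with $[H,E]=2E$, $[H,F]=-2F$, $[E,F]=H$. For $n\in\mathbb Z$ let $U_n$ be the span of all $E^iF^jH^k$ ($i,j,k\in\mathbb N$, $i-j=n$); this makes $U(\mathfrak{sl}_2)$ a $\mathbb Z$-graded algebra, and the even subalgebra is $U(\mathfrak{sl}_2)_e=\bigoplus_{n\in\mathbb Z}U_{2n}$. $\Re$ is generated by $A,B,C,\Delta$ with $[A,B]=[B,C]=[C,A]=2\Delta$ and such that $[A,\Delta]+AC-BA$, $[B,\Delta]+BA-CB$, $[C,\Delta]+CB-AC$ are central. $\sharp:\Re\to U(\mathfrak{sl}_2)$ is the unique algebra homomorphism with $A\mapsto \frac{(E+F-2)(E+F+2)}{16}$, $B\mapsto\frac{(H-2)(H+2)}{16}$, $C\mapsto\frac{(\mathbf iE-\mathbf iF-2)(\mathbf iE-\mathbf iF+2)}{16}$, $\Delta\mapsto\frac{(H+2)F^2-(H-2)E^2}{64}$. A subalgebra is proper if it is neither the whole algebra nor the subalgebra generated by the unit. *)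

(* Defs.v *)
From HB Require Import structures.
From mathcomp Require Import all_boot all_order all_algebra.
From mathcomp Require Import reals.
From mathcomp Require Export complex.
Set Implicit Arguments. Unset Strict Implicit. Unset Printing Implicit Defensive.
Import Order.TTheory GRing.Theory Num.Theory.
Local Open Scope ring_scope.

Section Defs.
Variable K : fieldType.

Definition comm {A : pzRingType} (x y : A) : A := x * y - y * x.

Definition central {A : pzRingType} (x : A) : Prop := forall y : A, x * y = y * x.

Inductive in_subalg_gen {A : algType K} (gens : seq A) : A -> Prop :=
| sg_gen x : x \in gens -> in_subalg_gen gens x
| sg_one : in_subalg_gen gens 1
| sg_add x y : in_subalg_gen gens x -> in_subalg_gen gens y -> in_subalg_gen gens (x + y)
| sg_scale (a : K) x : in_subalg_gen gens x -> in_subalg_gen gens (a *: x)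
| sg_mul x y : in_subalg_gen gens x -> in_subalg_gen gens y -> in_subalg_gen gens (x * y).

Definition pbw_mono {U : algType K} (E F H : U) (t : nat * nat * nat) : U :=
  E ^+ t.1.1 * F ^+ t.1.2 * H ^+ t.2.

(* (U, E, F, H) is (a model of) the universal enveloping algebra U(sl_2):
   the sl_2 relations hold and the PBW monomials E^i F^j H^k form a basis. *)
Definition is_Usl2 {U : algType K} (E F H : U) : Prop :=
  [/\ comm H E = 2%:R * E, comm H F = - (2%:R * F), comm E F = H,
      (forall (s : seq (nat * nat * nat)) (c : nat * nat * nat -> K),
          uniq s -> \sum_(t <- s) c t *: pbw_mono E F H t = 0 ->
          forall t, t \in s -> c t = 0) &
      (forall u : U, exists (s : seq (nat * nat * nat)) (c : nat * nat * nat -> K),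
          u = \sum_(t <- s) c t *: pbw_mono E F H t)].

Definition pbw_deg (t : nat * nat * nat) : int := (t.1.1)%:Z - (t.1.2)%:Z.

(* u lies in the even subalgebra U_e = (+)_n U_{2n}: u is a linear
   combination of PBW monomials E^i F^j H^k with i - j even. *)
Definition in_even_subalg {U : algType K} (E F H : U) (u : U) : Prop :=
  exists (s : seq (nat * nat * nat)) (c : nat * nat * nat -> K),
    all (fun t => (2 %| pbw_deg t)%Z) s /\
    u = \sum_(t <- s) c t *: pbw_mono E F H t.

Definition is_Re {R : algType K} (A B C D : R) : Prop :=
  [/\ comm A B = 2%:R * D, comm B C = 2%:R * D & comm C A = 2%:R * D] /\
  [/\ central (comm A D + A * C - B * A),
      central (comm B D + B * A - C * B) &
      central (comm C D + C * B - A * C)] /\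
  (forall x : R, in_subalg_gen [:: A; B; C; D] x).

End Defs.

(* Main.v *)
Require Import Defs.
From HB Require Import structures.
From mathcomp Require Import all_boot all_order all_algebra.
From mathcomp Require Import reals complex zify.
From Stdlib Require Import ClassicalEpsilon.
Set Implicit Arguments. Unset Strict Implicit. Unset Printing Implicit Defensive.
Import Order.TTheory GRing.Theory Num.Theory.
Local Open Scope ring_scope.

Section Comm.
Variable V : pzRingType.

Lemma pow_comm1 (X Y a : V) : X*Y = Y*X + Y*a -> Y*a = a*Y ->
  forall n, X*Y^+n = Y^+n*X + Y^+n*(a*+n).
Proof.
move=> h1 h2; elim=> [|n IH]; first by rewrite !expr0 mulr1 mul1r mulr0n mulr0 addr0.
rewrite exprSr mulrA IH mulrDl -!mulrA h1 mulrDr !mulrA -mulrA.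
rewrite -[Y ^+ n * (a *+ n) * Y]mulrA mulrnAl -h2 -mulrnAr mulrA.
by rewrite [Y ^+ n * (Y * _)]mulrA -addrA -mulrDr mulrS.
Qed.

Lemma pow_comm2 (X Y Z c : V) : X*Y = Y*X + Z -> Z*Y = Y*Z + Y*c -> Y*c = c*Y ->
  forall n, X*Y^+n.+1 = Y^+n.+1*X + Y^+n*(Z*+n.+1 + c*+'C(n.+1,2)).
Proof.
move=> h1 h2 h3; elim=> [|n IH].
  by rewrite expr1 expr0 mul1r bin_small // mulr0n addr0.
rewrite [Y^+n.+2]exprSr mulrA IH mulrDl -!mulrA h1 mulrDr.
have key : (Z *+ n.+1 + c *+ 'C(n.+1, 2)) * Y = Y * ((Z + c) *+ n.+1 + c *+ 'C(n.+1, 2)).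
  by rewrite mulrDl !mulrnAl h2 -h3 mulrDr !mulrnAr mulrDr.
rewrite key [Y ^+ n * (Y * _)]mulrA -exprSr -addrA -mulrDr; congr (_ + _ * _).
have -> : 'C(n.+2, 2) = (n.+1 + 'C(n.+1, 2))%N by rewrite binS bin1 addnC.
move: ('C(n.+1, 2)) => C; by rewrite mulrnDl mulrnDr [Z *+ n.+2]mulrS -!addrA.
Qed.
End Comm.

Notation T := (nat * nat * nat)%type.

Section Mono.
Variable K : fieldType.
Variable V : algType K.
Variables e f h : V.
Hypothesis he : h * e = e * h + e * 2%:R.
Hypothesis hf : h * f = f * h + f * (- 2%:R).
Hypothesis fe : f * e = e * f - h.

Definition lsum (W : lmodType K) (G : T -> W) (l : seq (T * K)) :=
  \sum_(p <- l) p.2 *: G p.1.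

Local Notation m := (pbw_mono e f h).

Lemma powHE i : h * e ^+ i = e ^+ i * h + e ^+ i * (2%:R *+ i).
Proof. by apply: pow_comm1 => //; rewrite commr_nat. Qed.
Lemma powHF j : h * f ^+ j = f ^+ j * h + f ^+ j * ((- 2%:R) *+ j).
Proof. by apply: pow_comm1 => //; rewrite mulrN mulNr commr_nat. Qed.

Lemma monoE i j k : e * m (i, j, k) = m (i.+1, j, k).
Proof. by rewrite /pbw_mono /= !mulrA exprS. Qed.

Lemma monoH i j k : h * m (i, j, k) =
  m (i, j, k.+1) + ((i * 2)%:R - (j * 2)%:R) *: m (i, j, k).
Proof.
rewrite /pbw_mono /= scalerBl !scaler_nat !mulrA powHE mulrDl mulrDl -[e ^+ i * h * f ^+ j]mulrA powHF.
rewrite mulrDr mulrDl !mulrA exprS !mulrA.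
rewrite mulNrn -!mulrnA mulrN mulNr -[e ^+ i * (2 * i)%:R * f ^+ j]mulrA -commr_nat mulrA.
rewrite !mulr_natr !mulrnAl (mulnC 2 i) (mulnC 2 j) -!addrA; congr (_ + _); exact: addrC.
Qed.
End Mono.

Section Mono2.
Variable K : fieldType.
Variable V : algType K.
Variables e f h : V.
Hypothesis he : h * e = e * h + e * 2%:R.
Hypothesis hf : h * f = f * h + f * (- 2%:R).
Hypothesis fe : f * e = e * f - h.
Local Notation m := (pbw_mono e f h).

Lemma monoF0 j k : f * m (0%N, j, k) = m (0%N, j.+1, k).
Proof. by rewrite /pbw_mono /= !expr0 !mul1r mulrA exprS. Qed.

Lemma powFE n : f * e ^+ n.+1 = e ^+ n.+1 * f + e ^+ n * ((- h) *+ n.+1 + (- 2%:R) *+ 'C(n.+1, 2)).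
Proof.
apply: pow_comm2; first by rewrite fe.
- by rewrite mulNr he opprD -!mulrN.
- by rewrite mulrN mulNr commr_nat.
Qed.

Lemma monoFS n j k : f * m (n.+1, j, k) =
  m (n.+1, j.+1, k) + ((- (n.+1)%:R) *: m (n, j, k.+1) +
    ((2 * j * n.+1)%:R - (2 * 'C(n.+1, 2))%:R) *: m (n, j, k)).
Proof.
rewrite /pbw_mono /= !mulrA powFE mulrDl mulrDl -[e ^+ n.+1 * f * f ^+ j]mulrA -exprS.
congr (_ + _).
rewrite mulrDr !mulrDl !mulrnAr !mulrnAl.
rewrite !mulrN !mulNr -[e ^+ n * h * f ^+ j]mulrA (powHF hf) mulrDr mulrDl.
have t1 : e ^+ n * (f ^+ j * h) * h ^+ k = e ^+ n * f ^+ j * h ^+ k.+1 by rewrite exprS !mulrA.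
have t2 : e ^+ n * (f ^+ j * ((- 2%:R) *+ j)) * h ^+ k = - ((e ^+ n * f ^+ j * h ^+ k) *+ (2 * j)).
  by rewrite mulNrn !mulrN mulNr mulrnAr mulr_natr -mulrnA mulrnAr mulrnAl.
have t3 : e ^+ n * 2%:R * f ^+ j * h ^+ k = (e ^+ n * f ^+ j * h ^+ k) *+ 2.
  by rewrite mulr_natr !mulrnAl.
rewrite t1 t2 t3 scalerBl !scaler_nat scaleNr scaler_nat.
rewrite opprB mulrnBl mulNrn -!mulrnA -addrA [RHS]addrCA; congr (_ + (_ - _)).
Qed.
End Mono2.

Section Consol.
Variable K : fieldType.
Variable W : lmodType K.

Definition cf (l : seq (T * K)) (t : T) : K := \sum_(p <- l | p.1 == t) p.2.

Lemma consol (G : T -> W) (l : seq (T * K)) (r : seq T) : uniq r ->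
  {subset map fst l <= r} ->
  lsum G l = \sum_(t <- r) cf l t *: G t.
Proof.
move=> ur; elim: l => [|q l IH] sub.
  by rewrite /lsum big_nil big1 // => t _; rewrite /cf big_nil scale0r.
rewrite /lsum big_cons -/(lsum G l) IH; last by move=> x hx; apply: sub; rewrite /= inE hx orbT.
have qr : q.1 \in r by apply: sub; rewrite /= inE eqxx.
symmetry.
transitivity (\sum_(t <- r) ((if q.1 == t then q.2 else 0) *: G t + cf l t *: G t)).
  by apply: eq_bigr => t _; rewrite /cf big_cons; case: ifP => _ //; rewrite ?scalerDl ?scale0r ?add0r.
rewrite big_split /=; congr (_ + _).
rewrite (bigD1_seq q.1) //= eqxx big1 ?addr0 // => t /negbTE; rewrite eq_sym => ->.
by rewrite scale0r.
Qed.
End Consol.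

Section Rep.
Variable K : fieldType.
Variable U : algType K.
Variables E F H : U.
Hypothesis HU : is_Usl2 E F H.
Local Notation m := (pbw_mono E F H).

Lemma indep (s : seq T) (c : T -> K) : uniq s -> \sum_(t <- s) c t *: m t = 0 ->
  forall t, t \in s -> c t = 0.
Proof. by case: HU => _ _ _ hi _; apply: hi. Qed.

Lemma span' u : exists l : seq (T * K), u = lsum m l.
Proof.
case: HU => _ _ _ _ /(_ u) [s [c ->]].
by exists (map (fun t => (t, c t)) s); rewrite /lsum big_map.
Qed.

Lemma rep_eq l l' : lsum m l = lsum m l' ->
  forall t, t \in undup (map fst (l ++ l')) -> cf l t = cf l' t.
Proof.
move=> e t; set r := undup (map fst (l ++ l')); move=> tr.
have ur : uniq r := undup_uniq _.
have s1 : {subset map fst l <= r} by move=> x hx; rewrite mem_undup map_cat mem_cat hx.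
have s2 : {subset map fst l' <= r} by move=> x hx; rewrite mem_undup map_cat mem_cat hx orbT.
have : \sum_(t <- r) (cf l t - cf l' t) *: m t = 0.
  under eq_bigr => x _ do rewrite scalerBl.
  by rewrite sumrB -(consol _ ur s1) -(consol _ ur s2) e subrr.
move/(indep ur)/(_ t tr)/eqP; rewrite subr_eq0 => /eqP //.
Qed.

Lemma transfer (W : lmodType K) (G : T -> W) l l' :
  lsum m l = lsum m l' -> lsum G l = lsum G l'.
Proof.
move=> e; set r := undup (map fst (l ++ l')).
have ur : uniq r := undup_uniq _.
have s1 : {subset map fst l <= r} by move=> x hx; rewrite mem_undup map_cat mem_cat hx.
have s2 : {subset map fst l' <= r} by move=> x hx; rewrite mem_undup map_cat mem_cat hx orbT.
rewrite (consol _ ur s1) (consol _ ur s2); apply: eq_big_seq => t tr.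
by rewrite (rep_eq e tr).
Qed.

Definition rep (u : U) : seq (T * K) := proj1_sig (constructive_indefinite_description _ (span' u)).
Lemma repP u : u = lsum m (rep u).
Proof. exact: (proj2_sig (constructive_indefinite_description _ (span' u))). Qed.
Definition phi (W : lmodType K) (G : T -> W) (u : U) : W := lsum G (rep u).

Variable W : lmodType K.
Variable G : T -> W.

Lemma phiE u l : u = lsum m l -> phi G u = lsum G l.
Proof. by move=> e; apply: transfer; rewrite -(repP u). Qed.

Lemma phi_lsum l : phi G (lsum m l) = lsum G l.
Proof. exact: phiE. Qed.

Lemma phiD x y : phi G (x + y) = phi G x + phi G y.
Proof.
have ex := repP x; have ey := repP y.
rewrite (phiE (l := rep x ++ rep y)) /phi /lsum ?big_cat //.
by rewrite -/(lsum m _) -/(lsum m _) -ex -ey.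
Qed.

Lemma phiZ a x : phi G (a *: x) = a *: phi G x.
Proof.
have ex := repP x.
rewrite (phiE (l := map (fun p => (p.1, a * p.2)) (rep x))) /phi /lsum.
  by rewrite big_map scaler_sumr; apply: eq_bigr => p _; rewrite scalerA.
by rewrite big_map {1}ex /lsum scaler_sumr; apply: eq_bigr => p _; rewrite scalerA.
Qed.

Lemma phi0 : phi G 0 = 0.
Proof. by rewrite (phiE (l := [::])) /lsum big_nil. Qed.

Lemma phi_sum (I : Type) (s : seq I) (w : I -> U) :
  phi G (\sum_(i <- s) w i) = \sum_(i <- s) phi G (w i).
Proof.
elim: s => [|x s IH]; first by rewrite !big_nil phi0.
by rewrite !big_cons phiD IH.
Qed.

End Rep.

Section Mult.
Variable K : fieldType.
Variable U : algType K.
Variables E F H : U.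
Hypothesis HU : is_Usl2 E F H.
Hypothesis HE : H * E = E * H + E * 2%:R.
Hypothesis HF : H * F = F * H + F * (- 2%:R).
Hypothesis FE : F * E = E * F - H.
Variable V : algType K.
Variables e f h : V.
Hypothesis he : h * e = e * h + e * 2%:R.
Hypothesis hf : h * f = f * h + f * (- 2%:R).
Hypothesis fe : f * e = e * f - h.
Local Notation m := (pbw_mono E F H).
Local Notation g := (pbw_mono e f h).
Local Notation ph := (phi HU g).

Lemma lsum1 (W : lmodType K) (G : T -> W) t : G t = lsum G [:: (t, 1)].
Proof. by rewrite /lsum big_cons big_nil scale1r addr0. Qed.

Lemma phim t : ph (m t) = g t.
Proof. by rewrite (lsum1 m) phi_lsum -lsum1. Qed.

Lemma phiX_gen (X : U) (x : V) : (forall t, ph (X * m t) = x * g t) ->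
  forall u, ph (X * u) = x * ph u.
Proof.
move=> hX u; rewrite [in LHS](repP HU u) /lsum mulr_sumr phi_sum.
rewrite [ph u]/phi [in RHS]/lsum mulr_sumr; apply: eq_bigr => p _.
by rewrite -scalerAr (phiZ HU) hX scalerAr.
Qed.

Lemma phiE_ u : ph (E * u) = e * ph u.
Proof. by apply: phiX_gen => -[[i j] k]; rewrite monoE monoE phim. Qed.

Lemma phiH_ u : ph (H * u) = h * ph u.
Proof.
apply: phiX_gen => -[[i j] k].
by rewrite (monoH HE HF) (monoH he hf) (phiD HU) (phiZ HU) !phim.
Qed.

Lemma phiF_ u : ph (F * u) = f * ph u.
Proof.
apply: phiX_gen => -[[[|n] j] k].
  by rewrite monoF0 monoF0 phim.
by rewrite (monoFS HE HF FE) (monoFS he hf fe) !(phiD HU) !(phiZ HU) !phim.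
Qed.

Lemma phiXn (X : U) (x : V) : (forall u, ph (X * u) = x * ph u) ->
  forall n u, ph (X ^+ n * u) = x ^+ n * ph u.
Proof.
move=> hX; elim=> [|n IH] u; first by rewrite !expr0 !mul1r.
by rewrite exprS -mulrA hX IH mulrA -exprS.
Qed.

Lemma phiM x y : ph (x * y) = ph x * ph y.
Proof.
rewrite [in LHS](repP HU x) /lsum mulr_suml phi_sum.
rewrite [ph x]/phi [in RHS]/lsum mulr_suml; apply: eq_bigr => -[[[i j] k] a] _ /=.
rewrite -scalerAl (phiZ HU) -scalerAl; congr (_ *: _).
rewrite /pbw_mono /= -!mulrA (phiXn phiE_) (phiXn phiF_) (phiXn phiH_).
by rewrite !mulrA.
Qed.

Lemma phi1 : ph 1 = 1.
Proof.
have -> : (1 : U) = m (0%N, 0%N, 0%N) by rewrite /pbw_mono /= !expr0 !mulr1.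
by rewrite phim /pbw_mono /= !expr0 !mulr1.
Qed.

Lemma phiMn x n : ph (x *+ n) = ph x *+ n.
Proof.
elim: n => [|n IH]; first by rewrite !mulr0n (phi0 HU).
by rewrite !mulrS (phiD HU) IH.
Qed.

Lemma phiN x : ph (- x) = - ph x.
Proof. by rewrite -[- x]scaleN1r (phiZ HU) scaleN1r. Qed.

End Mult.

Lemma comm_sq (V : pzRingType) (x a : V) : x * a = a * x ->
  (x + a) * (x - a) = (x - a) * (x + a).
Proof.
move=> xa; rewrite mulrDl !mulrBr mulrBl !mulrDr xa.
by rewrite addrA subrK opprD addrA addrK.
Qed.

Lemma neg_sq (V : pzRingType) (x a : V) : x * a = a * x ->
  (- x - a) * (- x + a) = (x - a) * (x + a).
Proof.
move=> xa; have -> : - x + a = - (x - a) by rewrite opprB addrC.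
rewrite -opprD mulrNN.
exact: comm_sq.
Qed.

Lemma sgn_pow (K : pzRingType) (U : algType K) (x : U) n :
  (- x) ^+ n = ((-1) ^+ n : K) *: x ^+ n.
Proof.
elim: n => [|n IH]; first by rewrite !expr0 scale1r.
by rewrite !exprS IH -scalerAr mulN1r [- x * _]mulNr scalerN scaleNr.
Qed.


Section Fix.
Variable K : fieldType.
Variable U : algType K.
Variables E F H : U.
Hypothesis HU : is_Usl2 E F H.
Hypothesis HE : H * E = E * H + E * 2%:R.
Hypothesis HF : H * F = F * H + F * (- 2%:R).
Hypothesis FE : F * E = E * F - H.
Variables e f h : U.
Hypothesis he : h * e = e * h + e * 2%:R.
Hypothesis hf : h * f = f * h + f * (- 2%:R).
Hypothesis fe : f * e = e * f - h.
Local Notation ps := (phi HU (pbw_mono e f h)).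

Lemma ps_E : ps E = e.
Proof.
transitivity (ps (pbw_mono E F H (1%N, 0%N, 0%N))); first by rewrite /pbw_mono /= expr1 !expr0 !mulr1.
by rewrite phim /pbw_mono /= expr1 !expr0 !mulr1.
Qed.
Lemma ps_F : ps F = f.
Proof.
transitivity (ps (pbw_mono E F H (0%N, 1%N, 0%N))); first by rewrite /pbw_mono /= expr1 !expr0 mulr1 mul1r.
by rewrite phim /pbw_mono /= expr1 !expr0 mulr1 mul1r.
Qed.
Lemma ps_H : ps H = h.
Proof.
transitivity (ps (pbw_mono E F H (0%N, 0%N, 1%N))); first by rewrite /pbw_mono /= expr1 !expr0 !mul1r.
by rewrite phim /pbw_mono /= expr1 !expr0 !mul1r.
Qed.
Lemma ps_nat n : ps n%:R = n%:R.
Proof. by rewrite (phiMn HU e f h) (phi1 HU e f h). Qed.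
Lemma ps_M x y : ps (x * y) = ps x * ps y.
Proof. exact: (phiM HU HE HF FE he hf fe). Qed.
Lemma ps_D x y : ps (x + y) = ps x + ps y.
Proof. exact: phiD. Qed.
Lemma ps_N x : ps (- x) = - ps x.
Proof. exact: (phiN HU e f h). Qed.
Lemma ps_Dn x n : ps (x + n%:R) = ps x + n%:R.
Proof. by rewrite ps_D ps_nat. Qed.
Lemma ps_Bn x n : ps (x - n%:R) = ps x - n%:R.
Proof. by rewrite ps_D ps_N ps_nat. Qed.
Lemma ps_Z a x : ps (a *: x) = a *: ps x.
Proof. exact: phiZ. Qed.

Lemma fix_im (Re : algType K) (A B C D : Re)
  (gen : forall x, in_subalg_gen [:: A; B; C; D] x) (sharp : {lrmorphism Re -> U}) :
  ps (sharp A) = sharp A -> ps (sharp B) = sharp B ->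
  ps (sharp C) = sharp C -> ps (sharp D) = sharp D ->
  forall r, ps (sharp r) = sharp r.
Proof.
move=> fA fB fC fD r; elim: (gen r) => {r}.
- by move=> x; rewrite !inE => /or4P [] /eqP ->.
- by rewrite rmorph1 (phi1 HU e f h).
- by move=> x y _ ex _ ey; rewrite rmorphD ps_D ex ey.
- by move=> a x _ ex; rewrite linearZ ps_Z ex.
- by move=> x y _ ex _ ey; rewrite rmorphM ps_M ex ey.
Qed.
End Fix.

Section Even.
Variable K : numFieldType.
Variable U : algType K.
Variables E F H : U.
Hypothesis HU : is_Usl2 E F H.
Local Notation m := (pbw_mono E F H).

Lemma th_mono t : pbw_mono (- E) (- F) H t =
  ((-1) ^+ (t.1.1 + t.1.2) : K) *: m t.
Proof.
by rewrite /pbw_mono !sgn_pow -scalerAl -scalerAr scalerA -exprD -scalerAl.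
Qed.

Lemma even_of_fixed u : phi HU (pbw_mono (- E) (- F) H) u = u ->
  in_even_subalg E F H u.
Proof.
move=> fu.
set l := rep HU u; set r := undup (map fst l).
have ur : uniq r := undup_uniq _.
have sub : {subset map fst l <= r} by move=> x; rewrite mem_undup.
have eu : u = \sum_(t <- r) cf l t *: m t by rewrite {1}(repP HU u) (consol _ ur sub).
have et : phi HU (pbw_mono (- E) (- F) H) u =
    \sum_(t <- r) (cf l t * (-1) ^+ (t.1.1 + t.1.2)) *: m t.
  rewrite /phi -/l (consol _ ur sub); apply: eq_bigr => t _.
  by rewrite th_mono scalerA.
have z : \sum_(t <- r) (cf l t * ((-1) ^+ (t.1.1 + t.1.2) - 1)) *: m t = 0.
  under eq_bigr => t _ do rewrite mulrBr mulr1 scalerBl.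
  by rewrite sumrB -et -eu fu subrr.
have c0 : forall t, t \in r -> ~~ (2 %| pbw_deg t)%Z -> cf l t = 0.
  move=> [[i j] k] tr hd.
  have /eqP := indep HU ur z tr; rewrite mulf_eq0 => /orP [/eqP //|].
  have od : odd (i + j) by move: hd; rewrite /pbw_deg /=; lia.
  rewrite -signr_odd /= od expr1 -opprD oppr_eq0 => /eqP.
  by move/eqP; rewrite -mulr2n pnatr_eq0.
exists (filter (fun t => (2 %| pbw_deg t)%Z) r), (cf l); split.
  exact: filter_all.
rewrite big_filter big_mkcond {1}eu; apply: eq_big_seq => t tr /=.
by case: ifP => // /negbT /(c0 t tr) ->; rewrite scale0r.
Qed.
End Even.

Unset Implicit Arguments.
Set Strict Implicit.
Local Open Scope complex_scope.

Theorem theorem7p8 (R : realType)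
  (U : algType R[i]) (E F H : U) (HU : is_Usl2 E F H)
  (Re : algType R[i]) (A B C D : Re) (HRe : is_Re A B C D)
  (sharp : {lrmorphism Re -> U})
  (hA : sharp A = (16%:R)^-1 *: ((E + F - 2%:R) * (E + F + 2%:R)))
  (hB : sharp B = (16%:R)^-1 *: ((H - 2%:R) * (H + 2%:R)))
  (hC : sharp C = (16%:R)^-1 *:
                    (('i *: E - 'i *: F - 2%:R) * ('i *: E - 'i *: F + 2%:R)))
  (hD : sharp D = (64%:R)^-1 *: ((H + 2%:R) * F ^+ 2 - (H - 2%:R) * E ^+ 2)) :
  let in_Im (u : U) := exists r : Re, u = sharp r in
  [/\ (forall u, in_Im u -> in_even_subalg E F H u),
      (exists u, in_even_subalg E F H u /\ ~ in_Im u) &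
      (exists u, in_Im u /\ ~ (exists a : R[i], u = a%:A))].
Proof.
move=> in_Im.
have [cHE cHF cEF _ _] := HU.
have gen : forall x, in_subalg_gen [:: A; B; C; D] x by case: HRe => _ [].
have HE : H * E = E * H + E * 2%:R.
  by move: cHE; rewrite /comm => /eqP; rewrite subr_eq => /eqP ->; rewrite addrC commr_nat.
have HF : H * F = F * H + F * (- 2%:R).
  by move: cHF; rewrite /comm => /eqP; rewrite subr_eq => /eqP ->; rewrite addrC mulrN commr_nat.
have FE : F * E = E * F - H by rewrite -cEF /comm opprB addrC subrK.
have thE : H * (- E) = (- E) * H + (- E) * 2%:R by rewrite mulrN HE opprD -!mulNr.
have thF : H * (- F) = (- F) * H + (- F) * (- 2%:R) by rewrite mulrN HF opprD -!mulNr.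
have thFE : (- F) * (- E) = (- E) * (- F) - H by rewrite !mulrNN FE.
have omE : (- H) * (- F) = (- F) * (- H) + (- F) * 2%:R by rewrite !mulrNN HF mulrN mulNr.
have omF : (- H) * (- E) = (- E) * (- H) + (- E) * (- 2%:R) by rewrite !mulrNN HE.
have omFE : (- E) * (- F) = (- F) * (- E) - (- H) by rewrite !mulrNN opprK FE subrK.
have c2 : forall x : U, x * 2%:R = 2%:R * x by move=> x; rewrite commr_nat.
have fixth : forall r, phi HU (pbw_mono (- E) (- F) H) (sharp r) = sharp r.
  apply: (fix_im (HU:=HU) HE HF FE thE thF thFE gen).
  - rewrite hA !(ps_Z HU) !(ps_M HU HE HF FE thE thF thFE) !(ps_Dn HU) !(ps_Bn HU) ?(ps_D HU) ?(ps_N HU).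
    rewrite (ps_E HU) (ps_F HU) -opprD neg_sq //.
  - rewrite hB !(ps_Z HU) !(ps_M HU HE HF FE thE thF thFE) !(ps_Dn HU) !(ps_Bn HU) ?(ps_D HU) ?(ps_N HU).
    by rewrite (ps_H HU).
  - rewrite hC !(ps_Z HU) !(ps_M HU HE HF FE thE thF thFE) !(ps_Dn HU) !(ps_Bn HU) ?(ps_D HU) ?(ps_N HU) !(ps_Z HU).
    rewrite (ps_E HU) (ps_F HU) !scalerN opprK.
    have -> : - ('i *: E) + 'i *: F = - ('i *: E - 'i *: F) by rewrite opprB addrC.
    by rewrite neg_sq.
  - rewrite hD !expr2 !(ps_Z HU) (ps_D HU) (ps_N HU) !(ps_M HU HE HF FE thE thF thFE) !(ps_Dn HU) !(ps_Bn HU).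
    by rewrite (ps_E HU) (ps_F HU) (ps_H HU) !mulrNN.
have fixom : forall r, phi HU (pbw_mono (- F) (- E) (- H)) (sharp r) = sharp r.
  apply: (fix_im (HU:=HU) HE HF FE omE omF omFE gen).
  - rewrite hA !(ps_Z HU) !(ps_M HU HE HF FE omE omF omFE) !(ps_Dn HU) !(ps_Bn HU) ?(ps_D HU) ?(ps_N HU).
    by rewrite (ps_E HU) (ps_F HU) -opprD [F + E]addrC neg_sq.
  - rewrite hB !(ps_Z HU) !(ps_M HU HE HF FE omE omF omFE) !(ps_Dn HU) !(ps_Bn HU) ?(ps_D HU) ?(ps_N HU).
    by rewrite (ps_H HU) neg_sq.
  - rewrite hC !(ps_Z HU) !(ps_M HU HE HF FE omE omF omFE) !(ps_Dn HU) !(ps_Bn HU) ?(ps_D HU) ?(ps_N HU) !(ps_Z HU).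
    rewrite (ps_E HU) (ps_F HU) !scalerN opprK.
    by rewrite [- _ + _]addrC.
  - rewrite hD !expr2 !(ps_Z HU) (ps_D HU) (ps_N HU) !(ps_M HU HE HF FE omE omF omFE) !(ps_Dn HU) !(ps_Bn HU).
    rewrite (ps_E HU) (ps_F HU) (ps_H HU) !mulrNN.
    have -> : - H + 2%:R = - (H - 2%:R) by rewrite opprB addrC.
    by rewrite -opprD !mulNr opprK addrC.
have mH : H = pbw_mono E F H (0%N, 0%N, 1%N) by rewrite /pbw_mono /= expr1 !expr0 !mul1r.
split.
- by move=> u [r ->]; apply: even_of_fixed; exact: fixth.
- exists H; split.
    exists [:: (0%N, 0%N, 1%N)], (fun _ => 1); split; first by [].
    by rewrite big_cons big_nil scale1r addr0 -mH.
  move=> [r er]; have := fixom r; rewrite -er (ps_H HU) => /eqP.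
  rewrite eq_sym -subr_eq0 opprK => /eqP hz.
  have := indep HU (s := [:: (0%N, 0%N, 1%N)]) (c := fun _ => 2%:R) erefl.
  rewrite big_cons big_nil addr0 -mH scaler_nat mulr2n => /(_ hz (0%N, 0%N, 1%N)).
  by rewrite inE eqxx => /(_ erefl) /eqP; rewrite pnatr_eq0.
- exists (sharp B); split; first by exists B.
  move=> [a ea].
  pose c := fun t : T => if t == (0%N, 0%N, 2%N) then (16%:R : R[i])^-1 else - (a + 16%:R^-1 * 4%:R).
  have := indep HU (s := [:: (0%N, 0%N, 2%N); (0%N, 0%N, 0%N)]) (c := c) erefl.
  rewrite !big_cons big_nil addr0 /c /= => /(_ _ (0%N, 0%N, 2%N)).
  rewrite /pbw_mono /= !expr0 !mul1r.
  have hsq : (H - 2%:R) * (H + 2%:R) = H ^+ 2 - 4%:R.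
    by rewrite mulrBl (mulrDr H) (mulrDr 2%:R) -c2 expr2 opprD addrA addrK -natrM.
  have e2 : a%:A = (16%:R : R[i])^-1 *: H ^+ 2 - ((16%:R : R[i])^-1 * 4%:R)%:A.
    by rewrite -ea hB hsq scalerBr -scalerA scaler_nat.
  move=> h0; have : (16%:R : R[i])^-1 = 0.
    apply: h0; last by rewrite inE eqxx.
    by rewrite scaleNr scalerDl e2 subrK subrr.
  by move/eqP; rewrite invr_eq0 pnatr_eq0.
Qed.
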